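(* Let $N\ge 2$ be an integer. Let $G$ be a finite, simple, bipartite graph with adjacency matrix $A$ such that (i) every vertex of $G$ has degree $N-1$, and (ii) for every edge $\{p,q\}$ of $G$, $(A^{3})_{pq}=\frac{(N-1)^{3}+1}{N}$ and $(A^{5})_{pq}=\frac{(N-1)^{5}+1}{N}$. Then for any two distinct vertices $p\neq q$ of $G$, $(A^2)_{pq}\le N-2$.
   Context: $(A^2)_{pq}$ is the number of walks of length 2 from $p$ to $q$. *)

(* Defs.v *)
From mathcomp Require Import all_boot all_order all_algebra.
Set Implicit Arguments. Unset Strict Implicit. Unset Printing Implicit Defensive.
Import GRing.Theory Num.Theory.
Local Open Scope ring_scope.

Definition simple_graph (n : nat) (e : rel 'I_n) : Prop :=
  (forall x, ~~ e x x) /\ (forall x y, e x y = e y x).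

Definition bipartite (n : nat) (e : rel 'I_n) : Prop :=
  exists c : 'I_n -> bool, forall x y, e x y -> c x != c y.

Definition degree (n : nat) (e : rel 'I_n) (x : 'I_n) : nat := #|[set y | e x y]|.

Definition adj (n : nat) (e : rel 'I_n) : 'M[rat]_n :=
  \matrix_(i, j) (e i j)%:R.

(* k-th power of a square matrix (works for every n, including n = 0). *)
Definition mxpow (n : nat) (A : 'M[rat]_n) (k : nat) : 'M[rat]_n :=
  iter k (fun B => A *m B) 1%:M.

(* Main.v *)
Require Import Defs.
From mathcomp Require Import all_boot all_order all_algebra.
From mathcomp Require Import ring lra.
Import Order.TTheory GRing.Theory Num.Theory.
Local Open Scope ring_scope.

Lemma mxpowS n (A : 'M[rat]_n) k : mxpow A k.+1 = A *m mxpow A k.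
Proof. by []. Qed.

Lemma mxpowSr n (A : 'M[rat]_n) k : mxpow A k.+1 = mxpow A k *m A.
Proof.
elim: k => [|k IH]; first by rewrite mxpowS /= mulmx1 mul1mx.
by rewrite [in LHS]mxpowS [in LHS]IH mulmxA.
Qed.

Lemma mxpowD n (A : 'M[rat]_n) k l : mxpow A (k + l) = mxpow A k *m mxpow A l.
Proof.
elim: k => [|k IH]; first by rewrite add0n /= mul1mx.
by rewrite addSn mxpowS IH mulmxA.
Qed.

Lemma mxpow_tr n (A : 'M[rat]_n) k : (mxpow A k)^T = mxpow A^T k.
Proof.
elim: k => [|k IH]; first by rewrite /= trmx1.
by rewrite mxpowS trmx_mul IH mxpowSr.
Qed.

Theorem lemma4 (N : nat) (n : nat) (e : rel 'I_n) :
  (2 <= N)%N ->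
  simple_graph e ->
  bipartite e ->
  (forall x : 'I_n, degree e x = (N - 1)%N) ->
  (forall p q : 'I_n, e p q ->
     mxpow (adj e) 3 p q = (((N - 1)%N)%:R ^+ 3 + 1) / N%:R /\
     mxpow (adj e) 5 p q = (((N - 1)%N)%:R ^+ 5 + 1) / N%:R) ->
  forall p q : 'I_n, p != q -> mxpow (adj e) 2 p q <= (N - 2)%N%:R.
Proof.
case: N => [|[|k]] // _ [_ esym] _ Hdeg Hpow p q pq.
rewrite !subSS !subn0 in Hdeg Hpow *.
set A := adj e in Hpow *.
set d : rat := k.+1%:R in Hpow.
pose W m := mxpow A m.
pose a (i j : 'I_n) : rat := (e i j)%:R.
have aE i j : A i j = a i j by rewrite mxE.
have asym i j : a i j = a j i by rewrite /a esym.
have a2 i j : a i j * a i j = a i j.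
  by rewrite /a; case: (e i j); rewrite ?mulr1n ?mulr0n ?mulr1 ?mulr0.
have hdeg i : \sum_j a i j = d.
  rewrite /d -(Hdeg i) /degree -sum1_card natr_sum [RHS]big_mkcond /=.
  by apply: eq_bigr => j _; rewrite inE /a; case: (e i j).
have hrow m i : \sum_j W m i j = d ^+ m.
  elim: m i => [|m IH] i.
    rewrite expr0 (bigD1 i) //= !mxE eqxx mulr1n big1 ?addr0 // => j ji.
    by rewrite mxE eq_sym (negbTE ji) mulr0n.
  transitivity (\sum_l a i l * d ^+ m).
    rewrite /W mxpowS; under eq_bigr do rewrite mxE.
    rewrite exchange_big /=; apply: eq_bigr => l _.
    by rewrite aE -(IH l) mulr_sumr.
  by rewrite -mulr_suml hdeg exprS.
have hsym m i j : W m i j = W m j i.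
  have AT : A^T = A by apply/matrixP => x y; rewrite !mxE esym.
  rewrite [RHS](_ : _ = (mxpow A m)^T i j); last by rewrite mxE.
  by rewrite mxpow_tr AT.
have hmul m l i j : W (m + l)%N i j = \sum_x W m i x * W l x j.
  by rewrite /W mxpowD mxE.
have hW1 i j : W 1%N i j = a i j by rewrite /W /= mulmx1 aE.
have W_ge0 m i j : 0 <= W m i j.
  elim: m i j => [|m IH] i j; first by rewrite /W /= mxE mulrn_wge0.
  rewrite /W mxpowS mxE; apply: sumr_ge0 => x _.
  by rewrite aE mulr_ge0 ?IH // /a ler0n.
have hcnt (f : 'I_n -> rat) C : (forall m, e p m -> f m = C) ->
    \sum_m a p m * f m = d * C.
  move=> hf; rewrite -(hdeg p) mulr_suml; apply: eq_bigr => m _.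
  rewrite /a; case E: (e p m); first by rewrite hf // mulr1n !mul1r.
  by rewrite !mulr0n !mul0r.
have hN : (k.+2)%:R = d + 1 :> rat by rewrite /d natr1.
have hd1 : d + 1 != 0 by rewrite -hN pnatr_eq0.
set C3 := d ^+ 2 - d + 1.
set C5 := d ^+ 4 - d ^+ 3 + d ^+ 2 - d + 1.
have h3 i j : e i j -> W 3 i j = C3.
  move=> /Hpow [-> _]; rewrite hN /C3; field.
  by rewrite (_ : 1 + k%:R + 1 = (k.+2)%:R :> rat) ?pnatr_eq0 // -!natr1; ring.
have h5 i j : e i j -> W 5 i j = C5.
  move=> /Hpow [_ ->]; rewrite hN /C5; field.
  by rewrite (_ : 1 + k%:R + 1 = (k.+2)%:R :> rat) ?pnatr_eq0 // -!natr1; ring.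
have hS1 : \sum_w W 2 p w = d ^+ 2 := hrow 2%N p.
have hS2 : \sum_w W 2 p w ^+ 2 = d * C3.
  transitivity (W 4 p p).
    rewrite (hmul 2 2 p p : W 4 p p = _); apply: eq_bigr => w _.
    by rewrite expr2 (hsym 2%N w p).
  rewrite (hmul 1 3 p p : W 4 p p = _).
  under eq_bigr do rewrite hW1.
  by apply: hcnt => m pm; apply: h3; rewrite esym.
pose Y u := (1 - a p u) * W 3 p u.
have b01 u : (1 - a p u) * (1 - a p u) = 1 - a p u.
  by rewrite /a; case: (e p u); rewrite ?mulr1n ?mulr0n ?subrr ?subr0 ?mulr1 ?mulr0.
have bge0 u : 0 <= 1 - a p u.
  by rewrite /a; case: (e p u); rewrite ?mulr1n ?mulr0n ?subrr ?subr0.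
have Yge0 u : 0 <= Y u by rewrite mulr_ge0.
have hSY : \sum_u Y u = d ^+ 2 - d.
  rewrite /Y; under eq_bigr do rewrite mulrBl mul1r.
  rewrite sumrB hrow (hcnt _ C3); last by move=> m; apply: h3.
  rewrite /C3; ring.
have hX2 : \sum_u W 3 p u ^+ 2 = d * C5.
  transitivity (W 6 p p).
    rewrite (hmul 3 3 p p : W 6 p p = _); apply: eq_bigr => w _.
    by rewrite expr2 (hsym 3%N w p).
  rewrite (hmul 1 5 p p : W 6 p p = _).
  under eq_bigr do rewrite hW1.
  by apply: hcnt => m pm; apply: h5; rewrite esym.
have hSY2 : \sum_u Y u ^+ 2 = (d ^+ 2 - d) ^+ 2.
  transitivity (\sum_u (1 - a p u) * W 3 p u ^+ 2).
    apply: eq_bigr => u _; rewrite /Y exprMn expr2 b01 //.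
  under eq_bigr do rewrite mulrBl mul1r.
  rewrite sumrB hX2 (hcnt _ (C3 ^+ 2)); last by move=> m pm; rewrite h3.
  rewrite /C3 /C5; ring.
have hpair u v : u != v -> Y u * Y v = 0.
  move=> uv.
  have E : (\sum_u Y u) ^+ 2 =
      \sum_u Y u ^+ 2 + \sum_u \sum_(v | v != u) Y u * Y v.
    rewrite expr2 mulr_suml -big_split; apply: eq_bigr => x _.
    by rewrite mulr_sumr (bigD1 x) //= expr2.
  have E0 : \sum_u \sum_(v | v != u) Y u * Y v = 0.
    move: E; rewrite hSY hSY2 => E; apply: (addrI ((d ^+ 2 - d) ^+ 2)).
    by rewrite addr0 -E.
  have := psumr_eq0P _ E0 (i := u) isT.
  move=> /(_ (fun x _ => sumr_ge0 _ (fun y _ => mulr_ge0 (Yge0 x) (Yge0 y)))) E1.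
  have := psumr_eq0P _ E1 (i := v); rewrite eq_sym uv; apply => //.
  by move=> y _; rewrite mulr_ge0.
have hK w u : 0 < W 2 p w -> e w u -> ~~ e p u -> 0 < Y u.
  move=> cw wu pu.
  rewrite /Y /a (negbTE pu) mulr0n subr0 mul1r (hmul 2 1 p u : W 3 p u = _).
  rewrite (bigD1 w) //= hW1 /a wu mulr1n mulr1.
  apply: (lt_le_trans cw); rewrite lerDl; apply: sumr_ge0 => x _.
  by rewrite hW1 mulr_ge0 ?(W_ge0 2%N) // /a ler0n.
have hc w : W 2 p w = \sum_u a w u * a p u.
  rewrite (hmul 1 1 p w : W 2 p w = _); apply: eq_bigr => u _.
  by rewrite !hW1 mulrC asym.
have hle1 w : 0 < W 2 p w -> d - W 2 p w <= 1.
  move=> cw.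
  rewrite hc -(hdeg w) -sumrB.
  under eq_bigr do rewrite -{1}(mulr1 (a w _)) -mulrBr.
  have Z0 v : ~~ (e w v && ~~ e p v) -> a w v * (1 - a p v) = 0.
    rewrite /a; case: (e w v); case: (e p v) => //= _;
      by rewrite ?mulr1n ?mulr0n ?subrr ?mulr0 ?mul0r.
  case: (pickP (fun u => e w u && ~~ e p u)) => [u /andP[wu pu] | none].
    rewrite (bigD1 u) //= big1 ?addr0.
      by rewrite /a wu (negbTE pu) mulr1n mulr0n subr0 mulr1.
    move=> v vu; apply: Z0; apply/negP => /andP[wv pv].
    have := hpair u v; rewrite eq_sym vu => /(_ isT) H.
    have := mulr_gt0 (hK w u cw wu pu) (hK w v cw wv pv).
    by rewrite H ltxx.
  by rewrite big1 ?ler01 // => v _; apply: Z0; rewrite none.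
have hT : \sum_w W 2 p w * (W 2 p w - (d - 1)) = d.
  under eq_bigr do rewrite mulrBr -expr2.
  by rewrite sumrB -mulr_suml hS2 hS1 /C3; ring.
have hcp : W 2 p p = d.
  by rewrite hc -(hdeg p); apply: eq_bigr => u _; rewrite asym a2.
rewrite (bigD1 p) //= hcp in hT.
have hrest : \sum_(w | w != p) W 2 p w * (W 2 p w - (d - 1)) = 0.
  have E : d * (d - (d - 1)) = d by ring.
  move: hT; rewrite E => /(canRL (addKr d)); by rewrite addNr.
have hge w : w != p -> 0 <= W 2 p w * (W 2 p w - (d - 1)).
  move=> _; have := W_ge0 2%N p w; rewrite le_eqVlt => /orP[/eqP <- | cw].
    by rewrite mul0r.
  apply: mulr_ge0; first exact: ltW.
  have := hle1 w cw; rewrite subr_ge0; lra.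
have := psumr_eq0P hge hrest (i := q); rewrite eq_sym pq => /(_ isT) /eqP.
rewrite mulf_eq0 => /orP[/eqP -> | ]; first by rewrite ler0n.
rewrite subr_eq0 => /eqP ->.
by rewrite /d -natr1 addrK.
Qed.
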